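(* Let $A\in\mathbb{C}^{p\times p}$ and $C\in\mathbb{C}^{q\times q}$ be Hermitian positive semidefinite, let $B\in\mathbb{C}^{p\times q}$, and let $H=\begin{bmatrix} A & B\\ B^* & -C\end{bmatrix}$. Then $H$ is nonsingular if and only if the matrices $A+\sqrt{BB^*}$ and $C+\sqrt{B^*B}$ are both positive definite.
   Context: $\sqrt{X}$ denotes the positive semidefinite square root of a positive semidefinite matrix $X$. *)

(* Defs.v *)
(* Complex numbers are modelled as R[i] = complex R for an
   arbitrary real number field R : realType (mathcomp-analysis), using the
   complex numbers of mathcomp-real-closed. *)
From HB Require Import structures.
From mathcomp Require Import all_boot all_order all_algebra.
From mathcomp Require Import reals.
From mathcomp.real_closed Require Import complex.
From Stdlib Require Import ClassicalEpsilon.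

Set Implicit Arguments.
Unset Strict Implicit.
Unset Printing Implicit Defensive.

Import Order.TTheory GRing.Theory Num.Theory.
Local Open Scope ring_scope.

Definition adjmx {C : numClosedFieldType} m n (M : 'M[C]_(m, n)) : 'M[C]_(n, m) :=
  map_mx Num.conj (M^T).

Definition hermitian {C : numClosedFieldType} n (M : 'M[C]_n) : Prop :=
  adjmx M = M.

Definition psdmx {C : numClosedFieldType} n (M : 'M[C]_n) : Prop :=
  hermitian M /\ forall x : 'cV[C]_n, 0 <= (adjmx x *m M *m x) 0 0.

Definition pdmx {C : numClosedFieldType} n (M : 'M[C]_n) : Prop :=
  hermitian M /\ forall x : 'cV[C]_n, x != 0 -> 0 < (adjmx x *m M *m x) 0 0.

(* It is chosen by Hilbert's epsilon
   operator; for a PSD argument this is exactly the PSD square root. *)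
Definition msqrt {C : numClosedFieldType} n (M : 'M[C]_n) : 'M[C]_n :=
  epsilon (inhabits 0) (fun X : 'M[C]_n => psdmx X /\ X *m X = M).

(* Main.v *)
Require Import Defs.
From HB Require Import structures.
From mathcomp Require Import all_boot all_order all_algebra.
From mathcomp Require Import reals.
From mathcomp.real_closed Require Import complex.
From mathcomp Require Import spectral.
From Stdlib Require Import ClassicalEpsilon.

Import Order.TTheory GRing.Theory Num.Theory.
Local Open Scope ring_scope.

Module Aux.
Set Implicit Arguments.
Unset Strict Implicit.


Section Gen.
Variable K : numClosedFieldType.

Lemma adjmxK m n (M : 'M[K]_(m, n)) : adjmx (adjmx M) = M.
Proof. by apply/matrixP => i j; rewrite !mxE conjCK. Qed.

Lemma adjmxM m n k (A : 'M[K]_(m, n)) (B : 'M[K]_(n, k)) :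
  adjmx (A *m B) = adjmx B *m adjmx A.
Proof. by rewrite /adjmx trmx_mul map_mxM. Qed.

Lemma adjmxD m n (A B : 'M[K]_(m, n)) : adjmx (A + B) = adjmx A + adjmx B.
Proof. by apply/matrixP => i j; rewrite !mxE rmorphD. Qed.

Lemma adjmxN m n (A : 'M[K]_(m, n)) : adjmx (- A) = - adjmx A.
Proof. by apply/matrixP => i j; rewrite !mxE rmorphN. Qed.

Lemma adjmx0 m n : adjmx (0 : 'M[K]_(m, n)) = 0.
Proof. by apply/matrixP => i j; rewrite !mxE rmorph0. Qed.

Lemma adjmx_delta m n (i : 'I_m) (j : 'I_n) :
  adjmx (delta_mx i j : 'M[K]_(m, n)) = delta_mx j i.
Proof. by apply/matrixP => a b; rewrite !mxE rmorph_nat andbC. Qed.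

Lemma adjmx_diag n (d : 'rV[K]_n) : adjmx (diag_mx d) = diag_mx (map_mx Num.conj d).
Proof. by rewrite /adjmx tr_diag_mx map_diag_mx. Qed.

Lemma diag_form n (s : 'rV[K]_n) (y : 'cV[K]_n) :
  (adjmx y *m diag_mx s *m y) 0 0 = \sum_j s 0 j * `|y j 0| ^+ 2.
Proof.
rewrite mul_mx_diag !mxE; apply: eq_bigr => j _; rewrite !mxE normCK.
by rewrite [_ * s 0 j]mulrC -mulrA [_ * (y j 0)^*]mulrC.
Qed.

Lemma diag_form_ge0 n (s : 'rV[K]_n) (y : 'cV[K]_n) :
  (forall j, 0 <= s 0 j) -> 0 <= (adjmx y *m diag_mx s *m y) 0 0.
Proof.
move=> hs; rewrite diag_form; apply: sumr_ge0 => j _.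
by rewrite mulr_ge0 // exprn_ge0.
Qed.

Lemma norm_form n (y : 'cV[K]_n) : (adjmx y *m y) 0 0 = \sum_j `|y j 0| ^+ 2.
Proof.
rewrite !mxE; apply: eq_bigr => j _; rewrite !mxE normCK mulrC.
by [].
Qed.

Lemma norm_form_eq0 n (y : 'cV[K]_n) : (adjmx y *m y) 0 0 = 0 -> y = 0.
Proof.
rewrite norm_form => h; apply/matrixP => j k; rewrite ord1 mxE.
have := @psumr_eq0P _ _ _ _ (fun i _ => exprn_ge0 2 (normr_ge0 (y i 0))) h j isT.
by move=> /eqP; rewrite sqrf_eq0 normr_eq0 => /eqP.
Qed.

Lemma herm_normal n (M : 'M[K]_n) : Defs.hermitian M -> M \is normalmx.
Proof. by move=> h; apply/normalmxP; change (M *m adjmx M = adjmx M *m M); rewrite h. Qed.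

Lemma psd_sqrt n (M : 'M[K]_n) : psdmx M -> exists S, psdmx S /\ S *m S = M.
Proof.
case=> Mh Mpos.
have /orthomx_spectralP ME := @herm_normal n M Mh.
set P := spectralmx M in ME; set d := spectral_diag M in ME.
have PU : P \is unitarymx := spectral_unitarymx M.
have PPt : P *m adjmx P = 1%:M := unitarymxP PU.
have PtP : adjmx P *m P = 1%:M.
  by have := mulmxKtV 1%:M PU erefl; rewrite mul1mx.
rewrite invmx_unitary // in ME; change (M = adjmx P *m diag_mx d *m P) in ME.
have dge0 : forall i, 0 <= d 0 i.
  move=> i; have := Mpos (adjmx ('e_i *m P)).
  rewrite adjmxK ME adjmxM adjmx_delta !mulmxA.
  rewrite -['e_i *m P *m adjmx P]mulmxA PPt mulmx1.
  rewrite -['e_i *m diag_mx d *m P *m adjmx P]mulmxA PPt mulmx1 -rowE row_diag_mx -scalemxAl.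
  by rewrite mul_delta_mx !mxE eqxx mulr1.
set s := map_mx sqrtC d.
have sge0 : forall j, 0 <= s 0 j by move=> j; rewrite mxE sqrtC_ge0.
exists (adjmx P *m diag_mx s *m P); split; [split|].
- rewrite /Defs.hermitian !adjmxM adjmxK adjmx_diag mulmxA.
  congr (_ *m _ *m _); congr diag_mx; apply/matrixP => a b.
  by rewrite [in LHS]mxE ord1; apply: geC0_conj.
- move=> x; rewrite !mulmxA -[adjmx x *m adjmx P]adjmxM.
  by rewrite -[_ *m P *m x]mulmxA diag_form_ge0.
  rewrite !mulmxA -[adjmx P *m diag_mx s *m P *m adjmx P]mulmxA PPt mulmx1.
  rewrite -[_ *m diag_mx s *m diag_mx s]mulmxA mulmx_diag ME; congr (_ *m _ *m _).
  congr diag_mx; apply/matrixP => a b; rewrite !mxE -expr2 sqrtCK.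
  by rewrite !ord1.
Qed.

Lemma msqrt_spec n (M : 'M[K]_n) : psdmx M -> psdmx (msqrt M) /\ msqrt M *m msqrt M = M.
Proof.
move=> /psd_sqrt [S HS]; rewrite /msqrt.
exact: (epsilon_spec (inhabits 0) (fun X : 'M[K]_n => psdmx X /\ X *m X = M) (ex_intro _ S HS)).
Qed.

Lemma psd_form0 n (M : 'M[K]_n) (x : 'cV[K]_n) : psdmx M ->
  (adjmx x *m M *m x) 0 0 = 0 -> M *m x = 0.
Proof.
move=> /psd_sqrt [S [[Sh _] SS]]; rewrite -SS => h.
have : S *m x = 0.
  apply: norm_form_eq0; rewrite adjmxM Sh -h !mulmxA //.
by rewrite -mulmxA => ->; rewrite mulmx0.
Qed.


Lemma entryD (M N : 'M[K]_1) : (M + N) 0 0 = M 0 0 + N 0 0.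
Proof. by rewrite mxE. Qed.
Lemma entryN (M : 'M[K]_1) : (- M) 0 0 = - M 0 0.
Proof. by rewrite mxE. Qed.
Lemma entry0 : (0 : 'M[K]_1) 0 0 = 0.
Proof. by rewrite mxE. Qed.
Lemma entry_adj (M : 'M[K]_1) : (adjmx M) 0 0 = (M 0 0)^*.
Proof. by rewrite !mxE. Qed.

Lemma psd_BBt m n (B : 'M[K]_(m, n)) : psdmx (B *m adjmx B).
Proof.
split; first by rewrite /Defs.hermitian adjmxM adjmxK.
move=> x; have -> : adjmx x *m (B *m adjmx B) *m x =
   adjmx (adjmx B *m x) *m (adjmx B *m x) by rewrite adjmxM adjmxK !mulmxA.
by rewrite norm_form; apply: sumr_ge0 => j _; apply: exprn_ge0.
Qed.

Lemma sqrt_ker m n (B : 'M[K]_(m, n)) (x : 'cV[K]_m) :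
  (msqrt (B *m adjmx B) *m x == 0) = (adjmx B *m x == 0).
Proof.
have [[Sh _] SS] := msqrt_spec (psd_BBt B).
set S := msqrt _ in Sh SS *.
apply/eqP/eqP => h.
- have h2 : B *m adjmx B *m x = 0 by rewrite -SS -mulmxA h mulmx0.
  apply: norm_form_eq0; rewrite adjmxM adjmxK -mulmxA [B *m _]mulmxA h2.
  by rewrite mulmx0 entry0.
- have h2 : S *m S *m x = 0 by rewrite SS -mulmxA h mulmx0.
  apply: norm_form_eq0; rewrite adjmxM Sh -mulmxA [S *m _]mulmxA h2.
  by rewrite mulmx0 entry0.
Qed.

Lemma pd_iff n (A S : 'M[K]_n) : psdmx A -> psdmx S ->
  pdmx (A + S) <-> (forall x : 'cV[K]_n, A *m x = 0 -> S *m x = 0 -> x = 0).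
Proof.
move=> [Ah Apos] [Sh Spos]; split.
- move=> [_ pd] x Ax Sx; apply/eqP; apply: contraT => xn0.
  have := pd x xn0; rewrite -mulmxA mulmxDl Ax Sx addr0 mulmx0 entry0.
  by rewrite ltxx.
- move=> hyp; split; first by rewrite /Defs.hermitian adjmxD Ah Sh.
  move=> x xn0; rewrite -mulmxA mulmxDl mulmxDr entryD !mulmxA.
  have ha := Apos x; have hs := Spos x.
  rewrite lt_def addr_ge0 // andbT paddr_eq0 //.
  apply/negP => /andP[/eqP a0 /eqP s0].
  have := hyp x (psd_form0 (conj Ah Apos) a0) (psd_form0 (conj Sh Spos) s0).
  by move=> e; rewrite e eqxx in xn0.
Qed.

Lemma unit_ker n (H : 'M[K]_n) :
  H \in unitmx <-> (forall v : 'cV[K]_n, H *m v = 0 -> v = 0).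
Proof.
split.
- move=> Hu v Hv; apply/eqP; apply: contraT => vn0.
  move: Hu; rewrite unitmxE unitfE -det_tr.
  suff -> : \det H^T == 0 by [].
  apply/det0P; exists v^T; first by rewrite trmx_eq0.
  by rewrite -trmx_mul Hv trmx0.
- move=> hyp; rewrite unitmxE unitfE -det_tr; apply/negP => /det0P [w wn0 hw].
  have : H *m w^T = 0 by rewrite -[H]trmxK -trmx_mul hw trmx0.
  move/hyp => /eqP; rewrite trmx_eq0 => /eqP e.
  by rewrite e eqxx in wn0.
Qed.

Lemma main p q (A : 'M[K]_p) (C : 'M[K]_q) (B : 'M[K]_(p, q)) :
  psdmx A -> psdmx C ->
  block_mx A B (adjmx B) (- C) \in unitmx <->
  (pdmx (A + msqrt (B *m adjmx B)) /\ pdmx (C + msqrt (adjmx B *m B))).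
Proof.
move=> hA hC.
have hS1 := (msqrt_spec (psd_BBt B)).1.
have hS2 : psdmx (msqrt (adjmx B *m B)).
  by have := (msqrt_spec (psd_BBt (adjmx B))).1; rewrite adjmxK.
have k2 : forall y : 'cV[K]_q, (msqrt (adjmx B *m B) *m y == 0) = (B *m y == 0).
  by move=> y; have := sqrt_ker (adjmx B) y; rewrite adjmxK.
split.
- move/unit_ker => hyp; split.
  + apply/(pd_iff hA hS1) => x Ax S1x.
    have Bx : adjmx B *m x = 0 by apply/eqP; rewrite -sqrt_ker; apply/eqP.
    have := hyp (col_mx x 0); rewrite mul_block_col Ax Bx !mulmx0 !addr0 col_mx0.
    by move=> /(_ erefl)/eqP; rewrite col_mx_eq0 => /andP[/eqP].
  + apply/(pd_iff hC hS2) => y Cy S2y.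
    have By : B *m y = 0 by apply/eqP; rewrite -k2; apply/eqP.
    have := hyp (col_mx 0 y); rewrite mul_block_col mulNmx Cy By !mulmx0 oppr0.
    rewrite !add0r col_mx0.
    by move=> /(_ erefl)/eqP; rewrite col_mx_eq0 => /andP[_ /eqP].
- move=> [pd1 pd2]; apply/unit_ker => v.
  rewrite -[v]vsubmxK; set x := usubmx v; set y := dsubmx v.
  rewrite mul_block_col => /eqP; rewrite col_mx_eq0 => /andP[/eqP e1 /eqP e2].
  have h1 : (adjmx x *m A *m x) 0 0 + (adjmx x *m B *m y) 0 0 = 0.
    by move: e1 => /(congr1 (mulmx (adjmx x))); rewrite mulmxDr mulmx0 !mulmxA
      => /(congr1 (fun M : 'M_1 => M 0 0)); rewrite entryD entry0.
  have h2 : ((adjmx x *m B *m y) 0 0)^* - (adjmx y *m C *m y) 0 0 = 0.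
    move: e2 => /(congr1 (mulmx (adjmx y))); rewrite mulmxDr mulmx0 !mulmxA.
    move=> /(congr1 (fun M : 'M_1 => M 0 0)); rewrite entryD entry0 -entry_adj.
    by rewrite !adjmxM adjmxK !mulmxA mulmxN mulNmx entryN.
  have ha := hA.2 x; have hc := hC.2 y.
  set a := (adjmx x *m A *m x) 0 0 in h1 ha.
  set c := (adjmx y *m C *m y) 0 0 in h2 hc.
  set b := (adjmx x *m B *m y) 0 0 in h1 h2.
  have eb : b = - a by apply/eqP; rewrite -addr_eq0 addrC h1.
  have ec : c = - a.
    have cb : b^* = - a.
      by rewrite eb; transitivity (- a^*); [exact: rmorphN | rewrite geC0_conj].
    by rewrite -cb; apply/esym/subr0_eq.
  have a0 : a = 0.
    by apply/le_anti; rewrite ha andbT -oppr_ge0 -ec.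
  have c0 : c = 0 by rewrite ec a0 oppr0.
  have Ax := psd_form0 hA a0; have Cy := psd_form0 hC c0.
  have By : B *m y = 0 by move: e1; rewrite Ax add0r.
  have Bx : adjmx B *m x = 0 by move: e2; rewrite mulNmx Cy oppr0 addr0.
  have x0 : x = 0.
    by refine ((pd_iff hA hS1).1 pd1 x Ax _); apply/eqP; rewrite sqrt_ker Bx.
  have y0 : y = 0.
    by refine ((pd_iff hC hS2).1 pd2 y Cy _); apply/eqP; rewrite k2 By.
  by rewrite x0 y0 col_mx0.
Qed.

End Gen.

End Aux.

Local Open Scope complex_scope.

Theorem corollary2p2 (R : realType) (p q : nat)
  (A : 'M[R[i]]_p) (C : 'M[R[i]]_q) (B : 'M[R[i]]_(p, q)) :
  psdmx A -> psdmx C ->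
  let H : 'M[R[i]]_(p + q) := block_mx A B (adjmx B) (- C) in
  H \in unitmx <->
  (pdmx (A + msqrt (B *m adjmx B)) /\ pdmx (C + msqrt (adjmx B *m B))).
Proof.
move=> hA hC /=; exact: Aux.main.
Qed.
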